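(* Let $\ell$ be an odd prime and suppose that $|S^2(\ell,T)|=o(T)$ as $T\to\infty$. Then $$|\{1\le n\le X: \Phi_\ell(n)\text{ is square-free}\}|\sim C X \quad\text{as } X\to\infty,$$ where $C=\prod_p\left(1-\frac{\delta(p^2)}{p^2}\right)$ (product over all primes $p$) and $\delta(N)=|\{a \bmod N: \Phi_\ell(a)\equiv 0 \pmod N\}|$.
   Context: $\Phi_\ell(X)$ denotes the $\ell$-th cyclotomic polynomial. For a natural number $n$, $R_\ell(n):=\min\{d\in\mathbb{N}: n\mid \Phi_\ell(d)\}$ if such $d$ exists, and $R_\ell(n)=\infty$ otherwise. $\mathbb{P}$ denotes the set of primes $p$ that divide $\Phi_\ell(d)$ for some $d\in\mathbb{N}$. For real $T$, $S^2(\ell,T):=\{p\in\mathbb{P}: R_\ell(p^2)\le T\}$. *)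

(* Defs.v *)
From mathcomp Require Import all_boot all_order all_algebra all_field.
From mathcomp Require Import all_classical all_reals all_analysis.
Set Implicit Arguments. Unset Strict Implicit. Unset Printing Implicit Defensive.
Import Order.TTheory GRing.Theory Num.Theory.
Local Open Scope ring_scope.

Definition PhiZ (l : nat) (a : int) : int := (Cyclotomic l).[a].

(* square-freeness of an integer z: z <> 0 and no p^2 (p prime) divides z.
   Primes dividing z <> 0 satisfy p <= |z|, so the quantifier is bounded. *)
Definition sqfreeZ (z : int) : bool :=
  (z != 0) && [forall p : 'I_(`|z|%N.+1), prime p ==> ~~ ((p ^ 2)%:Z %| z)%Z].

Definition count_sqfree (l X : nat) : nat :=
  #|[set n : 'I_X.+1 | (0 < n)%N && sqfreeZ (PhiZ l (nat_of_ord n)%:Z)]|.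

(* R_l(m) <= T  <->  exists d in N (d >= 1), d <= T, m | Phi_l(d). *)
Definition R_le (l m T : nat) : bool :=
  [exists d : 'I_T.+1, (0 < d)%N && ((m%:Z) %| PhiZ l (nat_of_ord d)%:Z)%Z].

(* |S^2(l,T)| = #{p prime : R_l(p^2) <= T} (such p automatically lie in the
   set P).  Any such p satisfies p^2 | Phi_l(d) for some 1 <= d <= T, with
   Phi_l(d) >= 1, so p < 1 + sum_{d<=T} |Phi_l(d)|; the count is over that range. *)
Definition S2bound (l T : nat) : nat := (\sum_(d < T.+1) `|PhiZ l (nat_of_ord d)%:Z|%N).+1.

Definition S2card (l T : nat) : nat :=
  #|[set p : 'I_(S2bound l T) | prime p && R_le l (p ^ 2) T]|.

Definition delta (l N : nat) : nat :=
  #|[set a : 'I_N | ((N%:Z) %| PhiZ l (nat_of_ord a)%:Z)%Z]|.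

Definition Cpart (R : realType) (l : nat) (N : nat) : R :=
  \prod_(p < N | prime p) (1 - (delta l (p ^ 2))%:R / (p ^ 2)%:R).

(* Main.v *)
Require Import Defs.
From mathcomp Require Import all_boot all_order all_algebra all_field.
From mathcomp Require Import all_classical all_reals all_analysis.
From mathcomp Require Import zify ring lra.
Import Order.TTheory GRing.Theory Num.Theory numFieldNormedType.Exports.
Set Implicit Arguments. Unset Strict Implicit. Unset Printing Implicit Defensive.

Definition phin (l n : nat) : nat := \sum_(i < l) n ^ i.

Lemma geomX (R : comRingType) (l : nat) :
  (('X - 1) * \sum_(i < l) 'X^i = 'X^l - 1 :> {poly R})%R.
Proof.
elim: l => [|l IH]; first by rewrite big_ord0 mulr0 expr0 subrr.
rewrite big_ord_recr /= mulrDr IH exprS; ring.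
Qed.

Lemma Phi_prime l : prime l -> Cyclotomic l = (\sum_(i < l) 'X^i)%R.
Proof.
move=> pl.
have h1 := prod_Cyclotomic (ltn0Sn 0).
have d1 : divisors 1 = [:: 1%N] by [].
rewrite d1 big_seq1 expr1 in h1.
have hl := prod_Cyclotomic (prime_gt0 pl).
have pe : perm_eq (divisors l) [:: 1%N; l].
  apply: uniq_perm; first exact: divisors_uniq.
    by rewrite /= inE andbT neq_ltn prime_gt1.
  move=> d; rewrite -dvdn_divisors ?prime_gt0 // !inE.
  apply/idP/idP.
    move=> hd; case/primeP: pl => _ H; case: (H d hd) => ->; rewrite ?eqxx ?orbT //.
  by case/orP=> /eqP->; rewrite ?dvd1n ?dvdnn.
rewrite (perm_big _ pe) /= big_cons big_seq1 h1 in hl.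
have nz : (('X - 1 : {poly int}) != 0)%R by rewrite polyXsubC_eq0.
apply: (mulIf nz) ; rewrite mulrC hl -geomX; ring.
Qed.

Lemma PhiZ_nat l n : prime l -> PhiZ l (Posz n) = Posz (phin l n).
Proof.
move=> pl; rewrite /PhiZ Phi_prime // horner_sum /phin.
under eq_bigr do rewrite hornerXn.
rewrite (big_morph Posz PoszD (erefl _)); apply: eq_bigr => i _.
by rewrite -!natz natrX.
Qed.

Lemma dvdZ_nat m n : (Posz m %| Posz n)%Z = (m %| n).
Proof. by rewrite dvdzE !absz_nat. Qed.

Lemma card_setI (N : nat) (P : pred nat) :
  #|[set n : 'I_N | P n]| = count P (iota 0 N).
Proof.
rewrite -sum1_card -sum1_count.
have -> : (iota 0 N) = index_iota 0 N by rewrite /index_iota subn0.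
rewrite (big_mkord P (fun _ => 1)).
by apply: eq_bigl => i; rewrite inE.
Qed.

Lemma deltaE l N : prime l -> delta l N = count (fun a => N %| phin l a) (iota 0 N).
Proof.
move=> pl; rewrite /delta -card_setI; apply: eq_card => a; rewrite !inE.
by rewrite PhiZ_nat // dvdZ_nat.
Qed.

Lemma phin_pos l n : 0 < l -> 0 < phin l n.
Proof.
case: l => // l _; rewrite /phin big_ord_recl expn0.
by rewrite addnC addn1.
Qed.

Lemma phinS l n : phin l.+1 n = phin l n + n ^ l.
Proof. by rewrite /phin big_ord_recr. Qed.

Lemma phin_geom l n : 0 < n -> n ^ l = (n - 1) * phin l n + 1.
Proof.
case: n => // k _; elim: l => [|l IH]; first by rewrite /phin big_ord0 muln0.
rewrite phinS expnS IH. nia.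
Qed.

Lemma phin_mod l n m : phin l n = phin l (n %% m) %[mod m].
Proof.
elim: l => [|l IH]; first by rewrite /phin !big_ord0.
by rewrite !phinS -modnDm IH modnDm -[in RHS]modnDmr modnXm modnDmr.
Qed.

Lemma phin0 l : 0 < l -> phin l 0 = 1.
Proof.
case: l => // l _; rewrite /phin big_ord_recl expn0 big1 // => i _.
by rewrite exp0n.
Qed.

Definition sqfb l n := [forall p : 'I_(phin l n).+1, prime p ==> ~~ (p ^ 2 %| phin l n)].

Lemma sqfbP l n : 0 < l ->
  reflect (forall p, prime p -> ~~ (p ^ 2 %| phin l n)) (sqfb l n).
Proof.
move=> l0; apply: (iffP forallP) => [H p pp | H p].
  apply/negP => hd; have := H (inord p).
  have lep : p < (phin l n).+1.
    rewrite ltnS; apply: leq_trans (dvdn_leq (phin_pos _ l0) hd).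
    by rewrite -{1}(expn1 p) leq_pexp2l // prime_gt0.
  by rewrite inordK // pp hd.
by apply/implyP => pp; apply: H.
Qed.

Lemma sqfreeZ_phin l n : prime l -> sqfreeZ (PhiZ l (Posz n)) = sqfb l n.
Proof.
move=> pl; rewrite /sqfreeZ PhiZ_nat // absz_nat.
have -> : (Posz (phin l n) != 0%R) = true.
  by have := phin_pos n (prime_gt0 pl); case: (phin l n).
by rewrite /=; apply: eq_forallb => p; rewrite dvdZ_nat.
Qed.

Lemma count_sqfreeE l X : prime l ->
  count_sqfree l X = count (fun n => (0 < n) && sqfb l n) (iota 0 X.+1).
Proof.
move=> pl; rewrite /count_sqfree -card_setI; apply: eq_card => a; rewrite !inE.
by rewrite sqfreeZ_phin.
Qed.

Lemma R_leE l m T : prime l ->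
  R_le l m T = has (fun d => (0 < d) && (m %| phin l d)) (iota 0 T.+1).
Proof.
move=> pl; rewrite /R_le; apply/existsP/hasP => [[d /andP[d0 hd]] | [d]].
  exists (val d); first by rewrite mem_iota /= add0n ltn_ord.
  by rewrite d0 -dvdZ_nat -PhiZ_nat.
rewrite mem_iota add0n /= => dl /andP[d0 hd]; exists (Ordinal dl).
by rewrite /= d0 PhiZ_nat // dvdZ_nat.
Qed.

Lemma S2cardE l T : prime l ->
  S2card l T = count (fun p => prime p && R_le l (p ^ 2) T) (iota 0 (S2bound l T)).
Proof. by move=> pl; rewrite /S2card -card_setI. Qed.

Lemma crt_count m1 m2 (P Q : pred nat) : coprime m1 m2 -> 0 < m1 -> 0 < m2 ->
  (forall n, P n = P (n %% m1)) -> (forall n, Q n = Q (n %% m2)) ->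
  count (fun n => P n && Q n) (iota 0 (m1 * m2)) = count P (iota 0 m1) * count Q (iota 0 m2).
Proof.
move=> co m10 m20 HP HQ.
pose f (n : 'I_(m1 * m2)) : 'I_m1 * 'I_m2 :=
  (Ordinal (ltn_pmod n m10), Ordinal (ltn_pmod n m20)).
have finj : injective f.
  move=> x y [] /eqP e1 /eqP e2; apply: val_inj => /=.
  have : x == y %[mod m1 * m2] by rewrite chinese_remainder // e1 e2.
  by rewrite !modn_small // => /eqP.
have fbij : bijective f.
  by apply: inj_card_bij => //; rewrite card_prod !card_ord.
rewrite -!card_setI -cardsX -(on_card_preimset (onW_bij _ fbij)).
apply: eq_card => n; rewrite !inE /=.
by rewrite -HP -HQ.
Qed.

Definition goodx l x n := all (fun p => ~~ (prime p && (p ^ 2 %| phin l n))) (iota 0 x).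
Definition Mx x := \prod_(p < x | prime p) p ^ 2.
Definition gx l x := count (goodx l x) (iota 0 (Mx x)).

Lemma goodxS l x n : goodx l x.+1 n = goodx l x n && ~~ (prime x && (x ^ 2 %| phin l n)).
Proof. by rewrite /goodx -[x.+1]addn1 iotaD all_cat /= andbT. Qed.

Lemma prod_recr_cond x (F : nat -> nat) :
  \prod_(p < x.+1 | prime p) F p = (\prod_(p < x | prime p) F p) * (if prime x then F x else 1).
Proof. by rewrite big_mkcond big_ord_recr /= -big_mkcond. Qed.

Lemma MxS x : Mx x.+1 = Mx x * (if prime x then x ^ 2 else 1).
Proof. by rewrite /Mx (prod_recr_cond x (fun p => p ^ 2)); case: (prime x). Qed.

Lemma Mx_pos x : 0 < Mx x.
Proof.
by rewrite /Mx prodn_cond_gt0 // => p pp; rewrite expn_gt0 prime_gt0.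
Qed.

Lemma dvd_Mx x p : prime p -> p < x -> p ^ 2 %| Mx x.
Proof.
elim: x => // x IH pp; rewrite ltnS leq_eqVlt => /orP[/eqP <- | lt].
  by rewrite MxS pp dvdn_mull.
by rewrite MxS dvdn_mulr // IH.
Qed.

Lemma coprime_Mx x y : prime y -> x <= y -> coprime (Mx x) (y ^ 2).
Proof.
move=> py; elim: x => [|x IH] le; first by rewrite /Mx big_ord0 coprime1n.
rewrite MxS coprimeMl IH ?(ltnW le) //=; case px: (prime x); last by rewrite coprime1n.
apply: coprimeXl; apply: coprimeXr; rewrite prime_coprime // dvdn_prime2 //.
by rewrite neq_ltn le.
Qed.

Lemma dvd_phin_mod l n m d : d %| m -> (d %| phin l n) = (d %| phin l (n %% m)).
Proof.
move=> dm; rewrite /dvdn [in LHS](phin_mod l n d) [in RHS](phin_mod l _ d).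
by rewrite modn_dvdm.
Qed.

Lemma goodx_mod l x n : goodx l x n = goodx l x (n %% Mx x).
Proof.
apply: eq_in_all => p; rewrite mem_iota add0n /= => lt.
case pp: (prime p) => //=.
by rewrite -dvd_phin_mod // dvd_Mx.
Qed.

Lemma gxS l x : prime l ->
  gx l x.+1 = gx l x * (if prime x then x ^ 2 - delta l (x ^ 2) else 1).
Proof.
move=> pl; rewrite /gx MxS; case px: (prime x); last first.
  rewrite !muln1; apply: eq_count => n; by rewrite goodxS px andbT.
have -> : count (goodx l x.+1) (iota 0 (Mx x * x ^ 2)) =
  count (fun n => goodx l x n && ~~ (x ^ 2 %| phin l n)) (iota 0 (Mx x * x ^ 2)).
  by apply: eq_count => n; rewrite goodxS px.
rewrite crt_count ?coprime_Mx ?Mx_pos ?expn_gt0 ?prime_gt0 //; last first.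
- by move=> n; rewrite -dvd_phin_mod.
- exact: goodx_mod.
congr (_ * _); rewrite deltaE //.
have h := count_predC (fun a => x ^ 2 %| phin l a) (iota 0 (x ^ 2)).
have e : count (fun n => ~~ (x^2 %| phin l n)) (iota 0 (x^2)) =
  count (predC (fun a => x^2 %| phin l a)) (iota 0 (x^2)) by [].
rewrite e; move: h; rewrite size_iota; lia.
Qed.

Lemma binom_modp2 p t k : (1 + p * t) ^ k = 1 + k * p * t %[mod p ^ 2].
Proof.
have [s ->] : exists s, (1 + p * t) ^ k = 1 + k * p * t + p ^ 2 * s.
  elim: k => [|k [s IH]]; first by exists 0; rewrite expn0 !muln0 mul0n !addn0.
  exists (k * t ^ 2 + s + p * s * t); rewrite expnS IH; ring.
by rewrite addnC mulnC modnMDl.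
Qed.


Lemma phin_root_pos l p a : 0 < l -> 1 < p -> p %| phin l a -> 0 < a.
Proof.
move=> l0 p1; case: a => // ; rewrite phin0 // dvdn1 => /eqP e.
by rewrite e in p1.
Qed.

Lemma pow_mod_one l m a : 0 < a -> m %| phin l a -> a ^ l = 1 %[mod m].
Proof.
move=> a0 hd; rewrite (phin_geom l a0).
by rewrite -modnDml; move: hd => /dvdnP[k ->]; rewrite mulnA modnMl add0n.
Qed.

Lemma one_modp_lift l p x : prime p -> prime l -> p != l ->
  x = 1 %[mod p] -> x ^ l = 1 %[mod p ^ 2] -> x = 1 %[mod p ^ 2].
Proof.
move=> pp pl pnl h1 hl.
have p1 := prime_gt1 pp.
have x0 : 0 < x.
  case: x h1 {hl} => // /esym; rewrite mod0n modn_small //.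
have : p %| x - 1 by rewrite -eqn_mod_dvd // h1.
case/dvdnP => t ht.
have ex : x = 1 + p * t by rewrite mulnC -ht subnKC.
move: hl; rewrite ex binom_modp2 => /eqP; rewrite eqn_mod_dvd ?leq_addr //.
rewrite addKn -mulnA mulnCA expnS expn1 dvdn_pmul2l ?prime_gt0 //.
rewrite Gauss_dvdr; last by rewrite prime_coprime // dvdn_prime2.
move=> pt; apply/eqP; rewrite eqn_mod_dvd ?leq_addr //.
by rewrite addKn dvdn_pmul2l ?prime_gt0.
Qed.

Lemma hensel l p a b : prime p -> prime l -> p != l ->
  p ^ 2 %| phin l a -> p ^ 2 %| phin l b -> a = b %[mod p] -> a = b %[mod p ^ 2].
Proof.
move=> pp pl pnl ha hb eab.
have p1 := prime_gt1 pp.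
have l0 := prime_gt0 pl.
have p21 : 1 < p ^ 2 by rewrite -(exp1n 2) ltn_exp2r.
have a0 := phin_root_pos l0 p21 ha.
have b0 := phin_root_pos l0 p21 hb.
have ual := pow_mod_one a0 ha.
have ubl := pow_mod_one b0 hb.
pose x := b * a ^ l.-1.
have xl : x ^ l = 1 %[mod p ^ 2].
  have e : (a ^ l.-1) ^ l = (a ^ l) ^ l.-1 by rewrite -!expnM mulnC.
  rewrite /x expnMn e -modnMml ubl modnMml mul1n.
  by rewrite -modnXm ual modnXm exp1n.
have al1 : a ^ l = 1 %[mod p].
  by apply: pow_mod_one => //; apply: dvdn_trans ha; rewrite dvdn_exp.
have x1 : x = 1 %[mod p].
  by rewrite /x -modnMml -eab modnMml -expnS prednK.
have := one_modp_lift pp pl pnl x1 xl.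
rewrite /x => hx.
have : b * a ^ l = a %[mod p ^ 2].
  by rewrite -[l]prednK // expnS mulnCA -modnMmr hx modnMmr muln1.
by rewrite -modnMmr ual modnMmr muln1 => ->.
Qed.

Lemma roots_modp l p : prime p -> 0 < l ->
  count (fun a => p %| phin l a) (iota 0 p) <= l.
Proof.
move=> pp l0; rewrite -size_filter.
set s := seq.filter _ _.
pose f (a : nat) : 'F_p := (a%:R)%R.
have us : uniq s by rewrite filter_uniq // iota_uniq.
have finj : {in s &, injective f}.
  move=> a b; rewrite !mem_filter !mem_iota /= => /andP[_ ha] /andP[_ hb] e.
  have h := val_Fp_nat pp a; rewrite /f in e; rewrite e val_Fp_nat // !modn_small // in h.
have ur : uniq (map f s) by rewrite map_inj_in_uniq.
have nz : ('X^l - 1 : {poly 'F_p})%R != 0%R.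
  by rewrite -size_poly_eq0 size_Xn_sub_1.
have ar : all (root ('X^l - 1)%R) (map f s).
  apply/allP => y /mapP[a]; rewrite mem_filter /= => /andP[ha _] ->.
  have a0 := phin_root_pos l0 (prime_gt1 pp) ha.
  rewrite /root !hornerE /f -natrX (phin_geom l a0) -Fp_nat_mod //.
  rewrite -modnDml; move: ha => /dvdnP[k ->]; rewrite mulnA modnMl add0n.
  by rewrite modn_small ?prime_gt1 // subrr.
have := max_poly_roots nz ar ur.
by rewrite size_map size_Xn_sub_1.
Qed.

Lemma delta_bound l p : prime l -> prime p ->
  count (fun a => p ^ 2 %| phin l a) (iota 0 (p ^ 2)) <= l ^ 2.
Proof.
move=> pl pp; have [<-|pnl] := eqVneq p l.
  by apply: leq_trans (count_size _ _) _; rewrite size_iota.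
apply: (@leq_trans (count (fun a => p %| phin l a) (iota 0 p))); last first.
  apply: leq_trans (roots_modp pp (prime_gt0 pl)) _.
  by rewrite expnS expn1 leq_pmulr // prime_gt0.
rewrite -!size_filter.
set s := seq.filter _ _.
have us : uniq s by rewrite filter_uniq // iota_uniq.
have p0 := prime_gt0 pp.
have finj : {in s &, injective (fun a => a %% p)}.
  move=> a b; rewrite !mem_filter !mem_iota /= => /andP[ha la] /andP[hb lb] e.
  have := hensel pp pl pnl ha hb e.
  by rewrite !modn_small.
rewrite -(size_map (fun a => a %% p)).
apply: uniq_leq_size; first by rewrite map_inj_in_uniq.
move=> y /mapP[a]; rewrite mem_filter /= => /andP[ha _] ->.
rewrite mem_filter mem_iota /= add0n ltn_pmod // andbT.
have hp : p %| phin l a by apply: dvdn_trans ha; rewrite dvdn_exp.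
by rewrite -dvd_phin_mod.
Qed.

Lemma count_periodic (P : pred nat) M k : (forall n, P n = P (n %% M)) ->
  count P (iota 0 (k * M)) = k * count P (iota 0 M).
Proof.
move=> HP; elim: k => [|k IH]; first by rewrite !mul0n.
have e : iota (0 + k * M) M = map (addn (k * M)) (iota 0 M).
  by rewrite add0n -{1}[k * M]addn0 iotaDl.
rewrite mulSn addnC iotaD count_cat IH e count_map addnC.
congr (_ + _); apply: eq_count => n /=.
rewrite HP [in RHS]HP; congr P; exact: modnMDl.
Qed.

Lemma count_iota_mono (P : pred nat) a b : a <= b ->
  count P (iota 0 a) <= count P (iota 0 b).
Proof.
move=> ab; rewrite -(subnKC ab) iotaD count_cat; exact: leq_addr.
Qed.

Lemma count_bounds (P : pred nat) M N : 0 < M -> (forall n, P n = P (n %% M)) ->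
  (N %/ M) * count P (iota 0 M) <= count P (iota 0 N) <= (N %/ M).+1 * count P (iota 0 M).
Proof.
move=> M0 HP; rewrite -!count_periodic //; apply/andP; split.
  by apply: count_iota_mono; rewrite leq_trunc_div.
apply: count_iota_mono; rewrite mulSn {1}(divn_eq N M) addnC leq_add2r.
by rewrite ltnW // ltn_pmod.
Qed.

Lemma count_prime_bad l p X : 0 < p ->
  count (fun n => p ^ 2 %| phin l n) (iota 0 X.+1) <=
  count (fun a => p ^ 2 %| phin l a) (iota 0 (p ^ 2)) * (X %/ p ^ 2).+1.
Proof.
move=> p0; have M0 : 0 < p ^ 2 by rewrite expn_gt0 p0.
rewrite mulnC -count_periodic; last by move=> n; rewrite -dvd_phin_mod.
apply: count_iota_mono; rewrite mulSn {1}(divn_eq X (p ^ 2)) addnC -addSn leq_add2r.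
by rewrite ltn_pmod.
Qed.

Lemma count_split (a b c : pred nat) s : {in s, forall n, a n -> b n || c n} ->
  count a s <= count b s + count c s.
Proof.
elim: s => //= y s IH H.
have H' : {in s, forall n, a n -> b n || c n} by move=> n ns; apply: H; rewrite inE ns orbT.
have := IH H'; have := H y (mem_head _ _).
case: (a y); case: (b y); case: (c y) => /= h1 h2; try lia; by have := h1 isT.
Qed.

Lemma union_bound (Q : pred nat) (Rl : nat -> pred nat) s r :
  count (fun n => has (fun p => Q p && Rl p n) s) r <= \sum_(p <- s | Q p) count (Rl p) r.
Proof.
elim: s => [|p s IH]; first by rewrite big_nil count_pred0.
rewrite big_cons /=.
apply: leq_trans (count_split (b := fun n => Q p && Rl p n)
   (c := fun n => has (fun p => Q p && Rl p n) s) _) _.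
  by move=> n _ /=.
case: (Q p) => /=; last by rewrite count_pred0.
by rewrite leq_add2l.
Qed.

Lemma phin_le_S2bound l X n : prime l -> n <= X -> phin l n < S2bound l X.
Proof.
move=> pl nX; rewrite /S2bound ltnS.
rewrite (bigD1 (inord n)) //= inordK ?ltnS // PhiZ_nat // absz_nat.
exact: leq_addr.
Qed.

Lemma sqfb_goodx l x n : 0 < l -> sqfb l n -> goodx l x n.
Proof.
move=> l0 /(sqfbP _ l0) H; apply/allP => p _; apply/negP => /andP[pp hd].
by have := H p pp; rewrite hd.
Qed.

Lemma count_sqfree_le l x X : prime l ->
  count_sqfree l X <= count (fun n => (0 < n) && goodx l x n) (iota 0 X.+1).
Proof.
move=> pl; rewrite count_sqfreeE //; apply: sub_count => n /andP[-> h] /=.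
exact: sqfb_goodx (prime_gt0 pl) h.
Qed.

Lemma main_ineq l x X : prime l ->
  count (fun n => (0 < n) && goodx l x n) (iota 0 X.+1) <=
  count_sqfree l X + l ^ 2 * (\sum_(p <- iota 0 (S2bound l X) | x <= p) X %/ p ^ 2 + S2card l X).
Proof.
move=> pl; have l0 := prime_gt0 pl.
pose Q p := [&& x <= p, prime p & R_le l (p ^ 2) X].
pose Rl p n := p ^ 2 %| phin l n.
rewrite count_sqfreeE //.
apply: leq_trans (count_split (b := fun n => (0 < n) && sqfb l n)
  (c := fun n => has (fun p => Q p && Rl p n) (iota 0 (S2bound l X))) _) _.
  move=> n; rewrite mem_iota add0n ltnS => /andP[_ nX] /andP[n0 gn].
  rewrite n0 andTb; case sq: (sqfb l n) => //; rewrite orFb.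
  move/negbT: sq; rewrite /sqfb negb_forall => /existsP [p].
  rewrite negb_imply negbK => /andP[pp hd].
  apply/hasP; exists (val p).
    rewrite mem_iota add0n /=; apply: leq_ltn_trans (phin_le_S2bound pl nX).
    apply: leq_trans (dvdn_leq (phin_pos _ l0) hd).
    by rewrite expnS expn1 leq_pmulr // prime_gt0.
  rewrite /Q /Rl hd pp andbT /= R_leE //; apply/andP; split.
    rewrite leqNgt; apply/negP => px; move/allP: gn => /(_ (val p)).
    by rewrite mem_iota add0n px pp hd => /(_ isT).
  by apply/hasP; exists n; rewrite ?mem_iota ?add0n ?ltnS // n0.
rewrite leq_add2l.
apply: leq_trans (union_bound Q Rl _ _) _.
apply: (@leq_trans (\sum_(p <- iota 0 (S2bound l X) | Q p) l ^ 2 * ((X %/ p ^ 2) + 1))).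
  apply: leq_sum => p /and3P[_ pp _].
  apply: leq_trans (count_prime_bad l X (prime_gt0 pp)) _.
  by rewrite addn1; apply: leq_mul => //; apply: delta_bound.
rewrite -(@big_distrr _ 0 muln addn) /= leq_pmul2l ?expn_gt0 ?l0 // big_split /=.
apply: leq_add.
  rewrite big_mkcond [X in _ <= X]big_mkcond /=; apply: leq_sum => p _.
  by rewrite /Q; case: (x <= p) => //=; case: (_ && _).
rewrite sum1_count S2cardE //; apply: sub_count => p /and3P[_ -> ->].
done.
Qed.


Lemma delta_le_sq l p : prime l -> prime p -> (delta l (p ^ 2) < p ^ 2)%N.
Proof.
move=> pl pp; rewrite deltaE //.
have p2 : (1 < p ^ 2)%N by rewrite -(exp1n 2) ltn_exp2r // prime_gt1.
rewrite -(ltn_add2r (count (predC (fun a => p ^ 2 %| phin l a)) (iota 0 (p ^ 2)))).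
rewrite count_predC size_iota -{1}(addn0 (p ^ 2)) ltn_add2l.
rewrite -has_count; apply/hasP; exists 0%N; first by rewrite mem_iota expn_gt0 prime_gt0.
by rewrite /= phin0 ?prime_gt0 // dvdn1 neq_ltn p2 orbT.
Qed.

Lemma delta_le_l2 l p : prime l -> prime p -> (delta l (p ^ 2) <= l ^ 2)%N.
Proof. by move=> pl pp; rewrite deltaE // delta_bound. Qed.

Section Real.
Variable R : realType.
Local Open Scope ring_scope.

Definition fac l x : R := if prime x then 1 - (delta l (x ^ 2))%:R / (x ^ 2)%:R else 1.

Lemma CpartS l x : Cpart R l x.+1 = Cpart R l x * fac l x.
Proof. by rewrite /Cpart big_mkcond big_ord_recr /= -big_mkcond /fac; case: (prime x). Qed.

Lemma fac_ratio l x : prime l -> fac l x =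
  (if prime x then x ^ 2 - delta l (x ^ 2) else 1)%N%:R / (if prime x then x ^ 2 else 1)%N%:R.
Proof.
move=> pl; rewrite /fac; case px: (prime x); last by rewrite divr1.
have x2 : (x ^ 2)%:R != 0 :> R by rewrite pnatr_eq0 -lt0n expn_gt0 prime_gt0.
rewrite natrB ?(ltnW (delta_le_sq pl px)) // mulrBl divff //.
Qed.

Lemma Cpart_ratio l x : prime l -> Cpart R l x = (gx l x)%:R / (Mx x)%:R.
Proof.
move=> pl; elim: x => [|x IH].
  by rewrite /Cpart /gx /Mx !big_ord0 /= divr1.
rewrite CpartS IH fac_ratio // gxS // MxS !natrM.
have m0 : (Mx x)%:R != 0 :> R by rewrite pnatr_eq0 -lt0n Mx_pos.
have b0 : (if prime x then x ^ 2 else 1)%N%:R != 0 :> R.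
  by case px: (prime x); rewrite /= pnatr_eq0 -lt0n // expn_gt0 prime_gt0.
rewrite mulrACA -invfM. done.
Qed.

Lemma fac_ge0 l x : prime l -> 0 < fac l x <= 1.
Proof.
move=> pl; rewrite /fac; case px: (prime x); last by rewrite ltr01 lexx.
have x2 : 0 < (x ^ 2)%:R :> R by rewrite ltr0n expn_gt0 prime_gt0.
rewrite subr_gt0 ltr_pdivrMr // mul1r ltr_nat delta_le_sq //=.
Qed.

Lemma Cpart_pos l x : prime l -> 0 < Cpart R l x <= 1.
Proof.
move=> pl; elim: x => [|x IH]; first by rewrite /Cpart big_ord0 ltr01 lexx.
rewrite CpartS; case/andP: IH => h1 h2; case/andP: (fac_ge0 x pl) => h3 h4.
by rewrite mulr_gt0 //= mulr_ile1 // ltW.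
Qed.

Lemma Cpart_noninc l : prime l -> {homo Cpart R l : m n / (m <= n)%N >-> n <= m}.
Proof.
move=> pl m n; elim: n => [|n IH]; first by rewrite leqn0 => /eqP ->.
rewrite leq_eqVlt => /orP[/eqP -> // | ]; rewrite ltnS => /IH h.
apply: le_trans h; rewrite CpartS.
case/andP: (Cpart_pos n pl) => h1 _; case/andP: (fac_ge0 n pl) => _ h4.
by rewrite ler_piMr // ltW.
Qed.


Lemma inv_tel (a : R) : 1 <= a -> ((a + 1) ^+ 2)^-1 <= a^-1 - (a + 1)^-1.
Proof.
move=> a1; have a0 : 0 < a by apply: lt_le_trans a1.
have a10 : 0 < a + 1 by rewrite addr_gt0.
have e : a^-1 - (a + 1)^-1 = ((a + 1) ^+ 2)^-1 + (a * (a + 1) ^+ 2)^-1.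
  by field; rewrite ?gt_eqF ?a0 ?a10.
rewrite e lerDl invr_ge0; apply: mulr_ge0; [exact: ltW | apply: exprn_ge0; exact: ltW].
Qed.

Lemma tail_sum (x B : nat) : (2 <= x)%N ->
  \sum_(p <- iota 0 B | (x <= p)%N) ((p ^ 2)%:R : R)^-1 +
    ((maxn B x)%:R - 1)^-1 <= (x%:R - 1)^-1.
Proof.
move=> x2; elim: B => [|B IH].
  by rewrite big_nil add0r max0n.
rewrite -[B.+1]addn1 iotaD big_cat /= big_cons big_nil addn1.
have [xB | Bx] := leqP x B.
  rewrite (maxn_idPl xB) (maxn_idPl (leqW xB)) in IH *.
  rewrite add0n addr0 -addrA; apply: le_trans IH; rewrite lerD2l.
  have B1 : 1 <= B%:R - 1 :> R.
    by rewrite lerBrDr; have : (2%:R : R) <= B%:R by rewrite ler_nat (leq_trans x2 xB).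
  have := inv_tel B1; rewrite subrK natrX -[B.+1]addn1 natrD addrK.
  by rewrite lerBrDr.
rewrite (maxn_idPr (ltnW Bx)) (maxn_idPr Bx) in IH *.
by rewrite addr0.
Qed.


Lemma step_ineq (C0 CN f K u t0 tN tN1 : R) : 0 <= C0 -> 0 <= CN -> CN <= C0 ->
  0 <= K -> 0 <= u -> 1 - K * u <= f -> C0 * (1 - K * (t0 - tN)) <= CN ->
  u <= tN - tN1 -> C0 * (1 - K * (t0 - tN1)) <= CN * f.
Proof.
move=> h0 h1 h2 h3 h4 h5 h6 h7.
have a1 : 0 <= CN * (f - (1 - K * u)) by apply: mulr_ge0; rewrite // subr_ge0.
have a2 : 0 <= (C0 - CN) * (K * u) by apply: mulr_ge0; rewrite ?subr_ge0 ?mulr_ge0.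
have a3 : 0 <= (C0 * K) * (tN - tN1 - u) by apply: mulr_ge0; rewrite ?mulr_ge0 ?subr_ge0.
nra.
Qed.

Lemma fac_lower l N : prime l -> (0 < N)%N ->
  1 - (l ^ 2)%:R * ((N ^ 2)%:R)^-1 <= fac l N.
Proof.
move=> pl N0; rewrite /fac; case pN: (prime N).
  rewrite lerD2l lerN2 ler_wpM2r // ?invr_ge0 // ler_nat.
  exact: delta_le_l2.
by rewrite lerBlDr lerDl mulr_ge0 // invr_ge0.
Qed.

Lemma Cpart_lower l x0 N : prime l -> (2 <= x0)%N -> (x0 <= N)%N ->
  Cpart R l x0 * (1 - (l ^ 2)%:R * ((x0%:R - 1)^-1 - (N%:R - 1)^-1)) <= Cpart R l N.
Proof.
move=> pl x2; elim: N => [|N IH]; first by rewrite leqn0 => /eqP e; rewrite e in x2.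
rewrite leq_eqVlt => /orP[/eqP <- | ]; first by rewrite subrr mulr0 subr0 mulr1.
rewrite ltnS => xN; have := IH xN => {}IH.
have N0 : (0 < N)%N by apply: leq_trans xN; apply: leq_trans x2.
rewrite CpartS.
case/andP: (Cpart_pos x0 pl) => c0 _; case/andP: (Cpart_pos N pl) => cN _.
apply: (step_ineq (u := ((N ^ 2)%:R)^-1) (tN := (N%:R - 1)^-1)) => //.
- exact: ltW.
- exact: ltW.
- exact: Cpart_noninc.
- exact: fac_lower.
have N1 : 1 <= N%:R - 1 :> R.
  by rewrite lerBrDr; have : (2%:R : R) <= N%:R by rewrite ler_nat (leq_trans x2 xN).
have := inv_tel N1; rewrite subrK natrX -[N.+1]addn1 natrD addrK //.
Qed.

End Real.


Definition Gc l x X := count (fun n => (0 < n) && goodx l x n) (iota 0 X.+1).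

Lemma Gc_count l x X : count (goodx l x) (iota 0 X.+1) = goodx l x 0 + Gc l x X.
Proof.
rewrite /Gc -addn1 addnC iotaD /= add0n; congr (_ + _).
apply: eq_in_count => n; rewrite mem_iota => /andP[n0 _].
by rewrite n0.
Qed.

Section Real2.
Variable R : realType.
Local Open Scope ring_scope.

Lemma G_bounds l x X : prime l ->
  (X%:R * Cpart R l x - ((Mx x)%:R + 2) <= (Gc l x X)%:R) /\
  ((Gc l x X)%:R <= X%:R * Cpart R l x + ((Mx x)%:R + 2)).
Proof.
move=> pl.
set M := Mx x; set g := gx l x; set k := (X.+1 %/ M)%N.
have M0 : (0 < M)%N by apply: Mx_pos.
have /andP[b1 b2] := count_bounds X.+1 M0 (@goodx_mod l x).
have gE : count (goodx l x) (iota 0 M) = g by [].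
rewrite Gc_count gE -/k in b1 b2.
set G := Gc l x X in b1 b2 *.
set e := nat_of_bool (goodx l x 0) in b1 b2.
have kM1 : (k * M <= X.+1)%N by rewrite leq_trunc_div.
have kM2 : (X.+1 <= k.+1 * M)%N.
  by rewrite mulSn {1}(divn_eq X.+1 M) addnC leq_add2r ltnW // ltn_pmod.
have gM : (g <= M)%N by rewrite /g /gx; apply: leq_trans (count_size _ _) _; rewrite size_iota.
have e01 : (e <= 1)%N by rewrite /e; case: (goodx l x 0).
rewrite Cpart_ratio // -/g -/M.
set c := g%:R / M%:R.
have MR : 0 < M%:R :> R by rewrite ltr0n.
have gc : g%:R = c * M%:R :> R by rewrite /c mulfVK // gt_eqF.
have c0 : 0 <= c by rewrite /c divr_ge0.
have h1 : (k * g)%:R <= (X.+1)%:R * c :> R.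
  have -> : (k * g)%:R = (k * M)%:R * c :> R by rewrite !natrM gc; ring.
  by rewrite ler_wpM2r // ler_nat.
have h2 : (X.+1)%:R * c <= (k.+1 * g)%:R :> R.
  have -> : (k.+1 * g)%:R = (k.+1 * M)%:R * c :> R by rewrite !natrM gc; ring.
  by rewrite ler_wpM2r // ler_nat.
have b1' : (k * g)%:R <= e%:R + G%:R :> R by rewrite -natrD ler_nat.
have b2' : e%:R + G%:R <= (k.+1 * g)%:R :> R by rewrite -natrD ler_nat.
have gM' : g%:R <= M%:R :> R by rewrite ler_nat.
have e1 : e%:R <= 1 :> R by rewrite -(ler_nat R) in e01.
have e0 : 0 <= e%:R :> R by [].
have c1 : c <= 1 by rewrite /c ler_pdivrMr // mul1r.
have XS : (X.+1)%:R = X%:R + 1 :> R by rewrite -addn1 natrD.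
rewrite XS in h1 h2.
split; nra.
Qed.


Lemma tail_div (X x B : nat) : (2 <= x)%N ->
  (\sum_(p <- iota 0 B | (x <= p)%N) (X %/ p ^ 2)%N)%:R <= X%:R * (x%:R - 1)^-1 :> R.
Proof.
move=> x2; rewrite natr_sum.
apply: le_trans (_ : X%:R * \sum_(p <- iota 0 B | (x <= p)%N) ((p ^ 2)%:R)^-1 <= _).
  rewrite mulr_sumr; apply: ler_sum => p xp.
  have p0 : 0 < (p ^ 2)%:R :> R by rewrite ltr0n expn_gt0 (leq_trans _ (leq_trans x2 xp)).
  by rewrite ler_pdivlMr // -natrM ler_nat leq_trunc_div.
rewrite ler_wpM2l //.
have := tail_sum R B x2; apply: le_trans; rewrite lerDl invr_ge0 subr_ge0.
by rewrite ler1n (leq_trans _ (leq_maxr B x)) // (leq_trans _ x2).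
Qed.

End Real2.

Unset Implicit Arguments.
Local Open Scope classical_set_scope.
Local Open Scope ring_scope.

Theorem theorem2 (R : realType) (l : nat) :
  prime l -> odd l ->
  (forall eps : R, 0 < eps ->
     exists T0 : nat, forall T : nat, (T0 <= T)%N -> (S2card l T)%:R <= eps * T%:R) ->
  exists C : R,
    (Cpart R l @ \oo --> C) /\
    ((fun X : nat => (count_sqfree l X)%:R / (C * X%:R)) @ \oo --> (1 : R)).
Proof.
move=> pl _ hyp.
have noninc : nonincreasing_seq (Cpart R l) by apply: Cpart_noninc.
have lb : has_lbound (range (Cpart R l)).
  exists 0 => y [n _ <-]; by case/andP: (Cpart_pos R n pl) => /ltW.
have cv := nonincreasing_is_cvgn noninc lb.
set C := limn (Cpart R l).
have CC : forall n, C <= Cpart R l n := nonincreasing_cvgn_ge noninc cv.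
set K : R := (l ^ 2)%:R.
have K0 : 0 < K by rewrite ltr0n expn_gt0 prime_gt0.
have Cpos : 0 < C.
  set x0 := (2 * l ^ 2).+1.
  have l0 := prime_gt0 pl.
  have x02 : (2 <= x0)%N by rewrite /x0 ltnS muln_gt0 expn_gt0 l0.
  have c0 : 0 < Cpart R l x0 by case/andP: (Cpart_pos R x0 pl).
  apply: (@lt_le_trans _ _ (Cpart R l x0 / 2)); first by rewrite divr_gt0.
  apply: limr_ge => //; exists x0 => // N /= hN.
  apply: le_trans (Cpart_lower R pl x02 hN).
  have ex0 : x0%:R - 1 = 2 * K :> R by rewrite /x0 -addn1 natrD addrK natrM.
  have N1 : 0 <= (N%:R - 1)^-1 :> R.
    by rewrite invr_ge0 subr_ge0 ler1n (leq_trans _ hN).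
  have Kb : K * (2 * K)^-1 = 2^-1.
   by field; rewrite pnatr_eq0 -lt0n l0.
  rewrite ex0 [K * _]mulrBr Kb.
  have := mulr_ge0 (ltW c0) (mulr_ge0 (ltW K0) N1).
  lra.
exists C; split; first exact: cv.
apply/cvgrPdist_lt => eps eps0.
set eta := eps * C / 4.
have eta0 : 0 < eta by rewrite /eta divr_gt0 // mulr_gt0.
have := cv; move/cvgrPdist_lt => /(_ eta eta0) [N1 _ HN1].
set N2 := Num.bound (K / eta).
have hN2 : K / eta < N2%:R by apply: archi_boundP; rewrite divr_ge0 // ltW.
set x := maxn (maxn N1 N2.+2) 2.
have x2 : (2 <= x)%N by rewrite leq_maxr.
have xN1 : (N1 <= x)%N by rewrite (leq_trans (leq_maxl N1 N2.+2)) // leq_maxl.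
have xN2 : (N2.+2 <= x)%N by rewrite (leq_trans (leq_maxr N1 N2.+2)) // leq_maxl.
have x1 : 0 < x%:R - 1 :> R.
  by rewrite subr_gt0 ltr1n (leq_trans _ x2).
have hx : K * (x%:R - 1)^-1 <= eta.
  rewrite ler_pdivrMr // -ler_pdivrMl // mulrC.
  apply: ltW; apply: lt_le_trans hN2 _.
  rewrite lerBrDr natr1 ler_nat; exact: (leq_trans (leqnSn _) xN2).
have hc := HN1 x xN1; have Cc := CC x.
set c := Cpart R l x in hc Cc.
set M := Mx x.
have [T0 HT0] := hyp (eta / K) (divr_gt0 eta0 K0).
pose X0 := maxn (maxn T0 1) (Num.bound ((M%:R + 2) / eta)).
exists X0 => // X /= hX.
have XT0 : (T0 <= X)%N by apply: leq_trans hX; rewrite /X0 !leq_max leqnn.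
have X1 : (1 <= X)%N by apply: leq_trans hX; rewrite /X0 !leq_max leqnn !orbT.
have XB : (Num.bound ((M%:R + 2) / eta) <= X)%N by apply: leq_trans hX; rewrite /X0 !leq_max leqnn !orbT.
have XR : 0 < X%:R :> R by rewrite ltr0n.
have hM : M%:R + 2 <= eta * X%:R.
  rewrite -ler_pdivrMl // mulrC; apply: ltW; apply: lt_le_trans (archi_boundP _) _.
    by rewrite divr_ge0 // ltW.
  by rewrite ler_nat.
have hs2 := HT0 X XT0.
have hA1 : (count_sqfree l X)%:R <= (Gc l x X)%:R :> R by rewrite ler_nat count_sqfree_le.
have hG : (Gc l x X)%:R <= (count_sqfree l X)%:R + K * ((\sum_(p <- iota 0 (S2bound l X) | (x <= p)%N) (X %/ p ^ 2)%N)%:R + (S2card l X)%:R) :> R.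
  by rewrite -natrD -natrM -natrD ler_nat main_ineq.
have hS := tail_div R X (S2bound l X) x2.
have [hGl hGu] := G_bounds R x X pl.
rewrite -/c -/M in hGl hGu.
set a := (count_sqfree l X)%:R in hA1 hG *.
set G := (Gc l x X)%:R in hA1 hG hGl hGu.
set S := (\sum_(p <- _ | _) _)%N%:R in hG hS.
set s2 := (S2card l X)%:R in hG hs2.
set Xr := X%:R in XR hM hs2 hS hGl hGu *.
have hKS : K * S <= eta * Xr.
  apply: le_trans (_ : K * (Xr * (x%:R - 1)^-1) <= _); first by rewrite ler_wpM2l // ltW.
  by rewrite mulrCA mulrC ler_wpM2r // ltW.
have hKs2 : K * s2 <= eta * Xr.
  apply: le_trans (_ : K * (eta / K * Xr) <= _); first by rewrite ler_wpM2l // ltW.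
  by rewrite mulrA mulrCA divff ?gt_eqF // mulr1.
have hc1 : Xr * c <= Xr * (C + eta).
  rewrite ler_pM2l //; move: hc; rewrite distrC => /ltr_distlDr /ltW h; exact: h.
have hc2 : Xr * C <= Xr * c by rewrite ler_pM2l.
have hup : a <= Xr * C + 2 * eta * Xr.
  lra.
have hlo : Xr * C - 3 * eta * Xr <= a by lra.
have CX : 0 < C * Xr by rewrite mulr_gt0.
have e : 1 - a / (C * Xr) = (C * Xr - a) / (C * Xr).
  by field; rewrite !gt_eqF.
rewrite e normrM normfV (gtr0_norm CX) ltr_pdivrMr //.
have : `|C * Xr - a| <= 3 * eta * Xr.
  rewrite ler_norml; apply/andP; split; lra.
move/le_lt_trans; apply.
rewrite /eta.
have := mulr_gt0 (mulr_gt0 eps0 Cpos) XR.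
lra.
Qed.
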